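(* Let $\sigma_{01},\sigma_{12}>0$, $\sigma_{02}=\sigma_{01}+\sigma_{12}$, let $\Gamma_{ij}\ge0$ ($i,j=1,2$) with $\Gamma_{12}=\Gamma_{21}$, and let $M=(M_1,M_2)$ with $M_1,M_2>0$. Then every minimizing configuration $(m^k)_{k\ge1}$ for $\overline{e_0}(M)$ has only finitely many nontrivial components, i.e. there is $N<\infty$ such that $m^k=(0,0)$ for all but at most $N$ indices $k$, and hence $\overline{e_0}(M)=\sum_{k=1}^N e_0(m^k)$ after relabeling.
   Context: For $m=(m_1,m_2)$ with $m_1,m_2\ge0$ set $$e_0(m)=2\sigma_{01}\sqrt{\pi(m_1+m_2)}+2\sigma_{12}\sqrt{\pi m_2}+\sum_{i,j=1}^2\frac{\Gamma_{ij}m_im_j}{4\pi},$$ so $e_0(0,0)=0$. $\overline{e_0}(M)=\inf\{\sum_{k\ge1}e_0(m^k): m^k=(m_1^k,m_2^k),\ m_i^k\ge0,\ \sum_k m_i^k=M_i,\ i=1,2\}$. A minimizing configuration is an admissible sequence $(m^k)$ attaining this infimum; nontrivial components are those with $m^k\neq(0,0)$. *)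

(* Defs.v *)
From Stdlib Require Import Reals Lra.
Open Scope R_scope.

Definition e0 (s01 s12 G11 G12 G21 G22 : R) (m : R * R) : R :=
  let m1 := fst m in let m2 := snd m in
  2 * s01 * sqrt (PI * (m1 + m2)) + 2 * s12 * sqrt (PI * m2)
  + (G11 * m1 * m1 + G12 * m1 * m2 + G21 * m2 * m1 + G22 * m2 * m2) / (4 * PI).

(* Admissible sequences for M = (M1, M2): nonnegative components whose
   component series sum to M1 and M2 (indices k >= 1 are shifted to k >= 0). *)
Definition admissible (M1 M2 : R) (m : nat -> R * R) : Prop :=
  (forall k, 0 <= fst (m k) /\ 0 <= snd (m k)) /\
  infinite_sum (fun k => fst (m k)) M1 /\
  infinite_sum (fun k => snd (m k)) M2.

(* m is a minimizing configuration for ebar(M) with value s: it is admissible,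
   its energy series converges to s, and no admissible configuration has a
   (convergent) energy below s; since e0 >= 0, divergent energy series have
   value +oo, so s is exactly the infimum ebar(M). *)
Definition minimizing (s01 s12 G11 G12 G21 G22 M1 M2 : R)
  (m : nat -> R * R) (s : R) : Prop :=
  admissible M1 M2 m /\
  infinite_sum (fun k => e0 s01 s12 G11 G12 G21 G22 (m k)) s /\
  (forall m' s', admissible M1 M2 m' ->
     infinite_sum (fun k => e0 s01 s12 G11 G12 G21 G22 (m' k)) s' -> s <= s').

(* Main.v *)
Require Import Defs.
From Stdlib Require Import Reals Lra Lia Psatz Classical.
Open Scope R_scope.

Lemma sum_mod (f g : nat -> R) (i j : nat) (di dj : R) :
  (forall k, g k = f k + (if Nat.eqb k i then di else 0) + (if Nat.eqb k j then dj else 0)) ->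
  forall n, sum_f_R0 g n = sum_f_R0 f n + (if Nat.leb i n then di else 0) + (if Nat.leb j n then dj else 0).
Proof.
  intros Hg n; induction n as [|n IH].
  - simpl. rewrite Hg.
    destruct (Nat.eqb_spec 0 i); destruct (Nat.eqb_spec 0 j);
    destruct (Nat.leb_spec i 0); destruct (Nat.leb_spec j 0); try lia; lra.
  - simpl sum_f_R0. rewrite IH, Hg.
    destruct (Nat.eqb_spec (S n) i); destruct (Nat.eqb_spec (S n) j);
    destruct (Nat.leb_spec i n); destruct (Nat.leb_spec j n);
    destruct (Nat.leb_spec i (S n)); destruct (Nat.leb_spec j (S n)); try lia; lra.
Qed.

Lemma inf_sum_mod (f g : nat -> R) (i j : nat) (di dj l : R) :
  (forall k, g k = f k + (if Nat.eqb k i then di else 0) + (if Nat.eqb k j then dj else 0)) ->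
  infinite_sum f l -> infinite_sum g (l + di + dj).
Proof.
  intros Hg Hf eps Heps. destruct (Hf eps Heps) as [N HN].
  exists (max N (max i j)). intros n Hn.
  rewrite (sum_mod f g i j di dj Hg n).
  destruct (Nat.leb_spec i n); destruct (Nat.leb_spec j n); try lia.
  specialize (HN n ltac:(lia)). unfold Rdist in *.
  replace (sum_f_R0 f n + di + dj - (l + di + dj)) with (sum_f_R0 f n - l) by ring. exact HN.
Qed.

Lemma term_small (f : nat -> R) (l : R) : infinite_sum f l ->
  forall eps, eps > 0 -> exists K, forall k, (K <= k)%nat -> Rabs (f k) < eps.
Proof.
  intros Hf eps Heps. destruct (Hf (eps/2) ltac:(lra)) as [N HN].
  exists (S N). intros k Hk. destruct k as [|k]; [lia|].
  pose proof (HN k ltac:(lia)) as A. pose proof (HN (S k) ltac:(lia)) as B.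
  unfold Rdist in *. simpl sum_f_R0 in B.
  revert A B. unfold Rabs. repeat destruct Rcase_abs; lra.
Qed.

Lemma sum_const_tail (f : nat -> R) (N : nat) : (forall k, (N < k)%nat -> f k = 0) ->
  forall n, (N <= n)%nat -> sum_f_R0 f n = sum_f_R0 f N.
Proof.
  intros Hf n Hn. induction n as [|n IH].
  - assert (N = 0)%nat by lia. subst. reflexivity.
  - destruct (Nat.eq_dec N (S n)) as [E|E]; [subst; reflexivity|].
    simpl sum_f_R0. rewrite IH by lia. rewrite (Hf (S n)) by lia. ring.
Qed.

Lemma sqrt_sub (u v : R) : 0 <= u -> 0 <= v -> sqrt (u + v) <= sqrt u + sqrt v.
Proof.
  intros Hu Hv. pose proof (sqrt_pos u); pose proof (sqrt_pos v).
  apply Rsqr_incr_0_var; [|nra]. unfold Rsqr. rewrite sqrt_sqrt by lra.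
  pose proof (sqrt_sqrt u Hu); pose proof (sqrt_sqrt v Hv). nra.
Qed.
Lemma key (s01 s12 G11 G12 G21 G22 a1 a2 b1 b2 : R) :
  0 < s01 -> 0 < s12 -> 0 <= G11 -> 0 <= G12 -> 0 <= G21 -> 0 <= G22 ->
  0 <= a1 -> 0 <= a2 -> 0 <= b1 -> 0 <= b2 -> 0 < a1 + a2 -> 0 < b1 + b2 ->
  a1 + a2 < Rmin 1 (s01 / (G11 + G12 + G21 + G22 + 1)) ->
  b1 + b2 < Rmin 1 (s01 / (G11 + G12 + G21 + G22 + 1)) ->
  e0 s01 s12 G11 G12 G21 G22 (a1 + b1, a2 + b2) <
  e0 s01 s12 G11 G12 G21 G22 (a1, a2) + e0 s01 s12 G11 G12 G21 G22 (b1, b2).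
Proof.
  intros h01 h12 g11 g12 g21 g22 ha1 ha2 hb1 hb2 hx hy hxd hyd.
  set (G := G11 + G12 + G21 + G22).
  set (d := s01 / (G + 1)) in *.
  assert (Hd : 0 < d) by (unfold d; apply Rdiv_lt_0_compat; unfold G; lra).
  assert (HdG : G * d < s01).
  { unfold d. apply (Rmult_lt_reg_r (G+1)); [unfold G; lra|].
    field_simplify; [|unfold G; lra]. nra. }
  assert (hx1 : a1 + a2 < 1) by (eapply Rlt_le_trans; [exact hxd| apply Rmin_l]).
  assert (hy1 : b1 + b2 < 1) by (eapply Rlt_le_trans; [exact hyd| apply Rmin_l]).
  assert (hxd' : a1 + a2 < d) by (eapply Rlt_le_trans; [exact hxd| apply Rmin_r]).
  assert (hyd' : b1 + b2 < d) by (eapply Rlt_le_trans; [exact hyd| apply Rmin_r]).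
  clear hxd hyd.
  unfold e0; simpl fst; simpl snd.
  set (x := a1 + a2) in *. set (y := b1 + b2) in *.
  replace (a1 + b1 + (a2 + b2)) with (x + y) by (unfold x, y; ring).
  pose proof PI_RGT_0 as Hpi. pose proof PI2_1 as Hpi3.
  rewrite !(sqrt_mult_alt PI) by lra.
  set (c := sqrt PI).
  assert (Hc : c * c = PI) by (apply sqrt_sqrt; lra).
  assert (Hc1 : 1 < c) by (pose proof (sqrt_pos PI); fold c in H; nra).
  assert (S12 : sqrt (a2 + b2) <= sqrt a2 + sqrt b2) by (apply sqrt_sub; lra).
  set (p := sqrt x). set (q := sqrt y). set (r := sqrt (x + y)).
  assert (Hp : p * p = x) by (apply sqrt_sqrt; lra).
  assert (Hq : q * q = y) by (apply sqrt_sqrt; lra).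
  assert (Hr : r * r = x + y) by (apply sqrt_sqrt; lra).
  assert (Hp0 : 0 < p) by (apply sqrt_lt_R0; lra).
  assert (Hq0 : 0 < q) by (apply sqrt_lt_R0; lra).
  assert (Hr0 : 0 <= r) by apply sqrt_pos.
  assert (Hp1 : p < 1) by nra.
  assert (Hq1 : q < 1) by nra.
  assert (Hr2 : r < 2) by nra.
  assert (Ht0 : r <= p + q) by nra.
  assert (Htp : (p + q - r) * (p + q + r) = 2 * (p * q)) by nra.
  assert (Hgain : p * q / 2 <= p + q - r) by nra.
  assert (Hpqd : p * q < d).
  { assert (p * q * (p * q) < d * d) by nra. nra. }
  set (cross := G11 * (a1+b1) * (a1+b1) + G12 * (a1+b1) * (a2+b2) + G21 * (a2+b2) * (a1+b1) + G22 * (a2+b2) * (a2+b2)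
      - (G11 * a1 * a1 + G12 * a1 * a2 + G21 * a2 * a1 + G22 * a2 * a2)
      - (G11 * b1 * b1 + G12 * b1 * b2 + G21 * b2 * b1 + G22 * b2 * b2)).
  assert (Hcross : cross <= 2 * G * (x * y)).
  { assert (E1 : 2 * G * (x * y) - cross = 2 * (G11 * (a1*b2 + a2*b1 + a2*b2)) + G12 * (2*a1*b1 + a1*b2 + a2*b1 + 2*a2*b2)
       + G21 * (2*a1*b1 + a1*b2 + a2*b1 + 2*a2*b2) + 2 * (G22 * (a1*b1 + a1*b2 + a2*b1))) by (unfold cross, G, x, y; ring).
    assert (0 <= G11 * (a1*b2 + a2*b1 + a2*b2)) by (apply Rmult_le_pos; nra).
    assert (0 <= G12 * (2*a1*b1 + a1*b2 + a2*b1 + 2*a2*b2)) by (apply Rmult_le_pos; nra).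
    assert (0 <= G21 * (2*a1*b1 + a1*b2 + a2*b1 + 2*a2*b2)) by (apply Rmult_le_pos; nra).
    assert (0 <= G22 * (a1*b1 + a1*b2 + a2*b1)) by (apply Rmult_le_pos; nra).
    lra. }
  assert (HG0 : 0 <= G) by (unfold G; lra).
  assert (Hxy : x * y = (p*q)*(p*q)) by nra.
  assert (Hmain : cross / (4 * PI) < 2 * s01 * (c * (p + q - r))).
  { apply (Rmult_lt_reg_r (4 * PI)); [lra|].
    unfold Rdiv. rewrite Rmult_assoc, Rinv_l, Rmult_1_r by lra.
    assert (G * (p*q) <= G * d) by (apply Rmult_le_compat_l; lra).
    assert (2 * s01 * (c * (p*q/2)) * (4 * PI) <= 2 * s01 * (c * (p + q - r)) * (4 * PI)).
    { apply Rmult_le_compat_r; [lra|]. apply Rmult_le_compat_l; [lra|].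
      apply Rmult_le_compat_l; lra. }
    assert (2 * G * ((p*q)*(p*q)) < 2 * s01 * (c * (p*q/2)) * (4 * PI)).
    { assert (s01 < s01 * c * (2*PI)).
      { assert (1 < c * (2*PI)) by nra. nra. }
      assert (G * (p*q) < s01 * c * (2*PI)) by lra.
      assert (0 < p*q) by nra.
      assert (G * (p*q) * (p*q) < s01 * c * (2*PI) * (p*q)) by (apply Rmult_lt_compat_r; lra).
      lra. }
    nra. }
  assert (E : forall A B : R, A / (4*PI) - B / (4*PI) = (A - B) / (4*PI)) by (intros; field; lra).
  assert (sqrt (PI) * 0 = 0) by ring.
  unfold cross in Hmain.
  match goal with |- ?L < ?R =>
    assert (ED : R - L = 2 * s01 * (c * (p + q - r)) + 2 * s12 * (c * (sqrt a2 + sqrt b2 - sqrt (a2 + b2))) -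
     cross / (4*PI)) by (unfold cross; field; lra) end.
  assert (0 <= 2 * s12 * (c * (sqrt a2 + sqrt b2 - sqrt (a2 + b2)))).
  { apply Rmult_le_pos; [lra|]. apply Rmult_le_pos; lra. }
  lra.
Qed.

Lemma e0_zero s01 s12 G11 G12 G21 G22 : e0 s01 s12 G11 G12 G21 G22 (0, 0) = 0.
Proof.
  unfold e0; simpl. replace (PI * (0 + 0)) with 0 by ring. replace (PI * 0) with 0 by ring.
  rewrite sqrt_0. pose proof PI_RGT_0. field. lra.
Qed.

Theorem corollary3p2 (s01 s12 s02 G11 G12 G21 G22 M1 M2 : R)
  (hs01 : 0 < s01) (hs12 : 0 < s12) (hs02 : s02 = s01 + s12)
  (hG11 : 0 <= G11) (hG12 : 0 <= G12) (hG21 : 0 <= G21) (hG22 : 0 <= G22)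
  (hGsym : G12 = G21) (hM1 : 0 < M1) (hM2 : 0 < M2)
  (m : nat -> R * R) (s : R) :
  minimizing s01 s12 G11 G12 G21 G22 M1 M2 m s ->
  exists N : nat,
    (forall k : nat, (N < k)%nat -> m k = (0, 0)) /\
    s = sum_f_R0 (fun k => e0 s01 s12 G11 G12 G21 G22 (m k)) N.
Proof.
  intros [[Hnn [H1 H2]] [He Hmin]].
  set (F := e0 s01 s12 G11 G12 G21 G22) in *.
  assert (F0 : F (0,0) = 0) by apply e0_zero.
  destruct (classic (exists N, forall k, (N < k)%nat -> m k = (0,0))) as [[N HN]|Hno].
  - exists N. split; [exact HN|].
    apply (uniqueness_sum (fun k => F (m k))); [exact He|].
    intros eps heps. exists N. intros n hn.
    rewrite (sum_const_tail (fun k => F (m k)) N); [| intros k hk; rewrite HN by exact hk; exact F0 | exact hn].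
    unfold Rdist. rewrite Rminus_diag, Rabs_R0. lra.
  - assert (Hinf : forall N, exists k, (N < k)%nat /\ m k <> (0,0)).
    { intros N. apply NNPP. intro Hc. apply Hno. exists N. intros k hk.
      apply NNPP. intro Hk. apply Hc. exists k. auto. }
    set (d := Rmin 1 (s01 / (G11 + G12 + G21 + G22 + 1))).
    assert (Hd : 0 < d).
    { unfold d. apply Rmin_pos; [lra|]. apply Rdiv_lt_0_compat; lra. }
    destruct (term_small _ _ H1 (d/2) ltac:(lra)) as [K1 HK1].
    destruct (term_small _ _ H2 (d/2) ltac:(lra)) as [K2 HK2].
    destruct (Hinf (max K1 K2)) as [i [Hi Hmi]].
    destruct (Hinf i) as [j [Hj Hmj]].
    pose proof (HK1 i ltac:(lia)) as Ai1. pose proof (HK2 i ltac:(lia)) as Ai2.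
    pose proof (HK1 j ltac:(lia)) as Aj1. pose proof (HK2 j ltac:(lia)) as Aj2.
    pose proof (Hnn i) as Ni. pose proof (Hnn j) as Nj.
    destruct (m i) as [a1 a2] eqn:Ei. destruct (m j) as [b1 b2] eqn:Ej.
    simpl in Ai1, Ai2, Aj1, Aj2, Ni, Nj.
    rewrite Rabs_right in Ai1, Ai2, Aj1, Aj2 by lra.
    assert (Hx : 0 < a1 + a2).
    { destruct (Rle_or_lt (a1 + a2) 0) as [h|h]; [|exact h].
      exfalso. apply Hmi. f_equal; lra. }
    assert (Hy : 0 < b1 + b2).
    { destruct (Rle_or_lt (b1 + b2) 0) as [h|h]; [|exact h].
      exfalso. apply Hmj. f_equal; lra. }
    set (m' := fun k => if Nat.eqb k i then (a1+b1, a2+b2) else if Nat.eqb k j then (0,0) else m k).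
    assert (Hpt : forall (Φ : R * R -> R) k, Φ (m' k) = Φ (m k)
        + (if Nat.eqb k i then Φ (a1+b1, a2+b2) - Φ (a1, a2) else 0)
        + (if Nat.eqb k j then Φ (0,0) - Φ (b1, b2) else 0)).
    { intros Φ k. unfold m'.
      destruct (Nat.eqb_spec k i); destruct (Nat.eqb_spec k j); subst; try lia.
      - rewrite Ei. ring.
      - rewrite Ej. ring.
      - ring. }
    assert (Hadm : admissible M1 M2 m').
    { split; [|split].
      - intros k. unfold m'. destruct (Nat.eqb k i); [simpl; lra|].
        destruct (Nat.eqb k j); [simpl; lra| apply Hnn].
      - replace M1 with (M1 + (fst (a1+b1, a2+b2) - fst (a1, a2)) + (fst (0,0) - fst (b1,b2)))
          by (simpl; ring).
        apply (inf_sum_mod (fun k => fst (m k)) (fun k => fst (m' k)) i j); [|exact H1].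
        intros k. apply (Hpt fst).
      - replace M2 with (M2 + (snd (a1+b1, a2+b2) - snd (a1, a2)) + (snd (0,0) - snd (b1,b2)))
          by (simpl; ring).
        apply (inf_sum_mod (fun k => snd (m k)) (fun k => snd (m' k)) i j); [|exact H2].
        intros k. apply (Hpt snd). }
    assert (HE' : infinite_sum (fun k => F (m' k))
              (s + (F (a1+b1, a2+b2) - F (a1, a2)) + (F (0,0) - F (b1,b2)))).
    { apply (inf_sum_mod (fun k => F (m k)) (fun k => F (m' k)) i j); [|exact He].
      intros k. apply (Hpt F). }
    pose proof (Hmin m' _ Hadm HE') as Hle.
    assert (Hk : F (a1 + b1, a2 + b2) < F (a1, a2) + F (b1, b2)).
    { unfold F. apply key; try lra; fold d; lra. }
    lra.
Qed.
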